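(* Let $X=(X_1,X_2,\ldots)$ be a stationary, $\psi$-mixing process with values in a finite set $\mathbb X$. Then there exists a sequence $(\lambda_\tau)_{\tau\ge0}$ with $\lambda_\tau\to0$ as $\tau\to\infty$ such that for all $t\in\mathbb N$, all $\tau\in\{0,1,2,\ldots\}$, all $T\in\{0,1,2,\ldots\}$, all $\mathbb A\subseteq\mathbb X^t$ with $\Pr(X_1^t\in\mathbb A)>0$ and all $\mathbb B\subseteq\mathbb X^T$, $$\Pr(X_{t+\tau+1}^{t+\tau+T}\in\mathbb B\mid X_1^t\in\mathbb A)=(1-\lambda_\tau)P_T(\mathbb B)+\lambda_\tau P'_{t,\tau,T,\mathbb A}(\mathbb B)$$ for some probability distribution $P'_{t,\tau,T,\mathbb A}$ on $\mathbb X^T$ (which may depend on $t,\tau,T,\mathbb A$ but not on $\mathbb B$).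
   Context: $X_a^b=(X_a,\ldots,X_b)$. $P_T(\mathbb B)=\Pr(X_{s+1}^{s+T}\in\mathbb B)$ for $\mathbb B\subseteq\mathbb X^T$, which is independent of $s$ by stationarity. $\psi$-mixing: for $\tau\in\{0,1,2,\ldots\}$ let $\psi(\tau)=\sup_{t\in\mathbb N}\sup_{\mathbb A,\mathbb B}\left|\frac{\Pr(X_1^t\in\mathbb A,\,X_{t+\tau+1}^\infty\in\mathbb B)}{\Pr(X_1^t\in\mathbb A)\Pr(X_{t+\tau+1}^\infty\in\mathbb B)}-1\right|$, the inner supremum over $\mathbb A\subseteq\mathbb X^t$ and Borel (product $\sigma$-field) sets $\mathbb B$ of sequences indexed by times $t+\tau+1,t+\tau+2,\ldots$, with both probabilities in the denominator positive. $X$ is $\psi$-mixing if $\psi(\tau)\to0$ as $\tau\to\infty$. *)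

(* Defs.v *)
From mathcomp Require Import all_boot all_order all_algebra.
From mathcomp Require Import all_classical all_reals all_analysis.
Unset Printing Implicit Defensive.
Import Order.TTheory GRing.Theory Num.Theory.
Local Open Scope classical_set_scope.
Local Open Scope ring_scope.

(* Conventions: the paper's X_1, X_2, ... is X 0, X 1, ... here (0-indexed).
   The finite alphabet is a finType T; X^n is {ffun 'I_n -> T}. *)
Section Defs.
Context {d : measure_display} {Omega : measurableType d} {R : realType}.
Variable P : probability Omega R.
Context {T : finType}.
Variable X : nat -> Omega -> T.

(* the word (X_{s+1}, ..., X_{s+n}) (paper indexing) *)
Definition block (s n : nat) (w : Omega) : {ffun 'I_n -> T} :=
  [ffun i : 'I_n => X (s + i) w].

Definition block_event (s n : nat) (A : {set {ffun 'I_n -> T}}) : set Omega :=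
  [set w | block s n w \in A].

Definition Pr (E : set Omega) : R := fine (P E).

Definition stationary : Prop :=
  forall (n s : nat) (B : {set {ffun 'I_n -> T}}),
    P (block_event s n B) = P (block_event 0 n B).

Definition cylinder_sets : set (set (nat -> T)) :=
  [set C | exists (j : nat) (x : T), C = [set u | u j = x]].
Definition product_sigma : set (set (nat -> T)) := <<s cylinder_sets >>.

Definition future (s : nat) (w : Omega) : nat -> T := fun k => X (s + k) w.

Definition future_event (s : nat) : set (set Omega) :=
  [set E | exists2 B, product_sigma B & E = future s @^-1` B].

(* psi(tau), as an extended real (the supremum may be +oo) *)
Definition psi_coeff (tau : nat) : \bar R :=
  ereal_sup [set r : \bar R | exists (t : nat) (A : {set {ffun 'I_t -> T}})
      (E : set Omega),
    [/\ (0 < t)%N, future_event (t + tau) E,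
        (0 < P (block_event 0 t A))%E, (0 < P E)%E &
        r = (`| Pr (block_event 0 t A `&` E) /
                (Pr (block_event 0 t A) * Pr E) - 1 |)%:E ] ].

Definition psi_mixing : Prop := psi_coeff @ \oo --> 0%E.

End Defs.

(* Main.v *)
Require Import Defs.
From mathcomp Require Import all_boot all_order all_algebra.
From mathcomp Require Import all_classical all_reals all_analysis.
From mathcomp Require Import ring lra.
Import Order.TTheory GRing.Theory Num.Theory.
Local Open Scope classical_set_scope.
Local Open Scope ring_scope.

Lemma sig_setI (U : Type) (G : set (set U)) (A B : set U) :
  <<s G>> A -> <<s G>> B -> <<s G>> (A `&` B).
Proof.
case: (smallest_sigma_algebra setT G) => G0 GC GU.
move=> hA hB.
have -> : A `&` B = setT `\` ((setT `\` A) `|` (setT `\` B)).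
  by rewrite !setTD -setCI setCK.
apply: (GC); rewrite -bigcup2E; apply: (GU) => -[|[|k]] /=; [exact: GC|exact: GC|exact: G0].
Qed.

Lemma listI (U : Type) (n : nat) (G : set (set U)) (Gi : 'I_n -> set U) :
  G setT -> (forall A B, G A -> G B -> G (A `&` B)) -> (forall i, G (Gi i)) ->
  G [set u | forall i, Gi i u].
Proof.
move=> GT GI Gg.
suff H : forall l : seq 'I_n, G [set u | forall i, i \in l -> Gi i u].
  have := H (enum 'I_n).
  congr G; apply/seteqP; split => u /= h i; [by apply: h; rewrite mem_enum|].
  by move=> _; apply: h.
elim=> [|a l IH].
  by congr G: GT; apply/seteqP; split => u //=.
have -> : [set u | forall i, i \in a :: l -> Gi i u] =
          Gi a `&` [set u | forall i, i \in l -> Gi i u].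
  apply/seteqP; split => u /=.
    move=> h; split; first by apply: h; rewrite mem_head.
    by move=> i il; apply: h; rewrite in_cons il orbT.
  by move=> [h1 h2] i; rewrite in_cons => /orP [/eqP -> //|]; apply: h2.
exact: GI.
Qed.

Lemma Pr_ge0 (d : measure_display) (Omega : measurableType d) (R : realType)
  (P : probability Omega R) (E : set Omega) : 0 <= Pr P E.
Proof. by rewrite /Pr fine_ge0 // measure_ge0. Qed.

Lemma fiber_meas (d : measure_display) (Omega : measurableType d) (T : finType)
  (X : nat -> Omega -> T) :
  (forall (i : nat) (x : T), measurable (X i @^-1` [set x])) ->
  forall s n (x : {ffun 'I_n -> T}), measurable [set w | block X s n w = x].
Proof.
move=> hX s n x.
have -> : [set w | block X s n w = x] =
          [set w | forall i : 'I_n, (X (s + i) @^-1` [set x i]) w].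
  apply/seteqP; split => w /=.
    by move=> <- i; rewrite /block ffunE.
  by move=> h; apply/ffunP => i; rewrite /block ffunE; apply: h.
apply: listI => //; first exact: measurableI.
Qed.

Lemma seq_meas (d : measure_display) (Omega : measurableType d) (U : eqType)
  (Y : Omega -> U) :
  (forall x, measurable [set w | Y w = x]) ->
  forall l : seq U, measurable [set w | Y w \in l].
Proof.
move=> hY; elim=> [|a l IH].
  by have -> : [set w | Y w \in [::]] = set0 by apply/seteqP; split => w.
have -> : [set w | Y w \in a :: l] = [set w | Y w = a] `|` [set w | Y w \in l].
  apply/seteqP; split => w /=; rewrite in_cons.
    by move=> /orP [/eqP ->|h]; [left|right].
  by move=> [->|->]; rewrite ?eqxx ?orbT.
exact: measurableU.
Qed.

Lemma Pr_sum_seq (d : measure_display) (Omega : measurableType d) (R : realType)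
  (P : probability Omega R) (U : eqType) (Y : Omega -> U) :
  (forall x, measurable [set w | Y w = x]) ->
  forall C, measurable C -> forall l : seq U, uniq l ->
  Pr P (C `&` [set w | Y w \in l]) = \sum_(x <- l) Pr P (C `&` [set w | Y w = x]).
Proof.
move=> hY C mC; elim=> [|a l IH] /=.
  move=> _; rewrite big_nil.
  have -> : C `&` [set w | Y w \in [::]] = set0 by apply/seteqP; split => w // [].
  by rewrite /Pr measure0.
move=> /andP [al ul]; rewrite big_cons -IH //.
have -> : C `&` [set w | Y w \in a :: l] =
   (C `&` [set w | Y w = a]) `|` (C `&` [set w | Y w \in l]).
  rewrite -setIUr; congr (C `&` _).
  apply/seteqP; split => w /=; rewrite in_cons.
    by move=> /orP [/eqP ->|h]; [left|right].
  by move=> [->|->]; rewrite ?eqxx ?orbT.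
have m1 : measurable (C `&` [set w | Y w = a]) by apply: measurableI.
have m2 : measurable (C `&` [set w | Y w \in l]) by apply: measurableI => //; apply: seq_meas.
rewrite /Pr measureU //; last first.
  apply/seteqP; split => w //= [[_ h1] [_ h2]].
  by move: al; rewrite -h1 h2.
by rewrite fineD // fin_num_measure.
Qed.

Lemma Pr_sum_block (d : measure_display) (Omega : measurableType d) (R : realType)
  (P : probability Omega R) (T : finType) (X : nat -> Omega -> T) :
  (forall (i : nat) (x : T), measurable (X i @^-1` [set x])) ->
  forall C, measurable C -> forall s n (B : {set {ffun 'I_n -> T}}),
  Pr P (C `&` block_event X s n B) =
  \sum_(x in B) Pr P (C `&` block_event X s n [set x]).
Proof.
move=> hX C mC s n B.
have -> : block_event X s n B = [set w | block X s n w \in enum B].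
  by apply/seteqP; split => w /=; rewrite /block_event /= mem_enum.
rewrite (@Pr_sum_seq _ _ _ P _ _ (@fiber_meas _ _ _ X hX s n)) ?enum_uniq // big_enum.
apply: eq_bigr => x _; congr (Pr P (C `&` _)).
by apply/seteqP; split => w; rewrite /block_event /= inE => /eqP.
Qed.

Lemma block_meas (d : measure_display) (Omega : measurableType d) (T : finType)
  (X : nat -> Omega -> T) :
  (forall (i : nat) (x : T), measurable (X i @^-1` [set x])) ->
  forall s n (B : {set {ffun 'I_n -> T}}), measurable (block_event X s n B).
Proof.
move=> hX s n B.
have -> : block_event X s n B = [set w | block X s n w \in enum B].
  by apply/seteqP; split => w /=; rewrite /block_event /= mem_enum.
exact: (@seq_meas _ _ _ _ (@fiber_meas _ _ _ X hX s n)).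
Qed.

Theorem lemma1 (d : measure_display) (Omega : measurableType d) (R : realType)
  (P : probability Omega R) (T : finType) (X : nat -> Omega -> T) :
  (forall (i : nat) (x : T), measurable (X i @^-1` [set x])) ->
  stationary P X -> psi_mixing P X ->
  exists lam : nat -> R, lam @ \oo --> 0 /\
    forall (t tau n : nat) (A : {set {ffun 'I_t -> T}}),
      (0 < t)%N -> (0 < P (block_event X 0 t A))%E ->
      exists p : {ffun 'I_n -> T} -> R,
        [/\ (forall x, 0 <= p x), \sum_x p x = 1 &
          forall B : {set {ffun 'I_n -> T}},
            Pr P (block_event X 0 t A `&` block_event X (t + tau) n B)
              / Pr P (block_event X 0 t A)
            = (1 - lam tau) * Pr P (block_event X 0 n B)
              + lam tau * \sum_(x in B) p x ].
Proof.
move=> hX hstat hmix.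
set psi := psi_coeff P X.
pose lam := fun tau : nat => if psi tau \is a fin_num
  then Order.min 1 (`|fine (psi tau)| + tau.+1%:R^-1) else 1.
have lam_pos : forall tau, 0 < lam tau <= 1.
  move=> tau; rewrite /lam; case: ifP => _; last by rewrite ltr01 lexx.
  rewrite minEle; case: ifP => h; first by rewrite ltr01 lexx.
  apply/andP; split; last by rewrite leNgt; move/negbT: h; rewrite -ltNge => /ltW; rewrite leNgt.
  by apply: ltr_pwDr; rewrite ?invr_gt0 ?ltr0Sn.
exists lam; split.
  have /fine_cvgP [Hfin Hf] : psi @ \oo --> (0%R)%:E by exact: hmix.
  apply/cvgr0Pnorm_lt => e e0.
  have e20 : 0 < e / 2 by rewrite divr_gt0.
  have H1 : \forall tau \near \oo, `|fine (psi tau)| < e / 2.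
    by move/cvgr0Pnorm_lt : Hf => /(_ _ e20).
  have H2 := near_infty_natSinv_lt (PosNum e20).
  near=> tau.
  have hf : psi tau \is a fin_num by near: tau.
  have h1 : `|fine (psi tau)| < e / 2 by near: tau.
  have h2 : tau.+1%:R^-1 < e / 2 by near: tau.
  have := lam_pos tau => /andP [l0 l1].
  rewrite ger0_norm ?ltW //.
  rewrite /lam hf minEle; case: ifP => h3.
    move: h1 h2 h3; move: (`|fine (psi tau)|) (tau.+1%:R^-1) => a b; clear; move=> *; lra.
  move: h1 h2; move: (`|fine (psi tau)|) (tau.+1%:R^-1) => a b; clear; move=> *; lra.
  Unshelve. all: end_near.
move=> t tau n A t0 PA.
have mEA : measurable (block_event X 0 t A) := @block_meas _ _ _ X hX 0 t A.
set EA := block_event X 0 t A in PA mEA *.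
set pa := Pr P EA.
have pa0 : 0 < pa.
  by rewrite /pa /Pr fine_gt0 // PA /= ltey_eq fin_num_measure.
set Q := fun x => Pr P (EA `&` block_event X (t+tau) n [set x]) / pa.
set Pi := fun x => Pr P (block_event X 0 n [set x]).
have Q0 : forall x, 0 <= Q x by move=> x; rewrite /Q divr_ge0 // ?Pr_ge0 // ltW.
have [l0 l1] := andP (lam_pos tau).
have key : forall x, (1 - lam tau) * Pi x <= Q x.
  move=> x.
  have mE : measurable (block_event X (t + tau) n [set x]) :=
    @block_meas _ _ _ X hX (t + tau) n [set x].
  set E := block_event X (t + tau) n [set x] in mE *.
  have PiE : Pi x = Pr P E by rewrite /Pi /E /Pr (hstat n (t + tau)).
  rewrite PiE.
  have [PE0|PEpos] : P E = 0%E \/ (0 < P E)%E.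
    by have := measure_ge0 P E; rewrite le_eqVlt => /orP [/eqP <-|]; [left|right].
    by rewrite /Pr PE0 /= mulr0; exact: Q0.
  case: (boolP (psi tau \is a fin_num)) => hf; last first.
    by rewrite /lam (negbTE hf) subrr mul0r; exact: Q0.
  set pe := Pr P E.
  have pe0 : 0 < pe.
    by rewrite /pe /Pr fine_gt0 // PEpos /= ltey_eq fin_num_measure.
  set q := Pr P (EA `&` E) / (pa * pe).
  have q0 : 0 <= q by rewrite /q divr_ge0 ?Pr_ge0 // mulr_ge0 // ltW.
  have hr : ((`|q - 1|)%:E <= psi tau)%E.
    apply: ereal_sup_ubound; exists t, A, E; split => //.
    exists [set u | forall i : 'I_n, [set u : nat -> T | u i = x i] u].
      have hT : @product_sigma T setT.
        case: (smallest_sigma_algebra setT (@cylinder_sets T)) => G0 GC _.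
        by have := GC _ G0; rewrite setD0.
      have hI : forall A B, @product_sigma T A -> product_sigma B -> product_sigma (A `&` B).
        by move=> A0 B0; apply: sig_setI.
      have hC : forall i : 'I_n, @product_sigma T [set u : nat -> T | u i = x i].
        by move=> i; apply: sub_sigma_algebra; exists (nat_of_ord i), (x i).
      exact: (@listI (nat -> T) n (@product_sigma T) (fun i => [set u : nat -> T | u i = x i]) hT hI hC).
    apply/seteqP; split => w; rewrite /E /block_event /future /= inE.
      by move=> /eqP <- i; rewrite /block ffunE.
    by move=> h; apply/eqP/ffunP => i; rewrite /block ffunE; apply: h.
  have hq : 1 - `|fine (psi tau)| <= q.
    have : `|q - 1| <= fine (psi tau) by rewrite -lee_fin fineK.
    have := ler_norm (1 - q); rewrite distrC.
    have := ler_norm (fine (psi tau)).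
    move: (fine (psi tau)) (`|fine (psi tau)|) (`|q - 1|) => a b c.
    move=> *; lra.
  have Qx : Q x = q * pe.
    by rewrite /Q /q; field; rewrite ?gt_eqF.
  rewrite Qx; apply: ler_wpM2r; first exact: ltW.
  rewrite /lam hf minEle; case: ifP => h; first by rewrite subrr.
  have : 0 < tau.+1%:R^-1 :> R by rewrite invr_gt0 ltr0Sn.
  move: hq; move: (`|fine (psi tau)|) (tau.+1%:R^-1) => a b.
  move=> *; lra.
exists (fun x => (Q x - (1 - lam tau) * Pi x) / lam tau).
have sumQ : forall B : {set {ffun 'I_n -> T}}, \sum_(x in B) Q x = Pr P (EA `&` block_event X (t+tau) n B) / pa.
  by move=> B; rewrite (@Pr_sum_block _ _ _ P _ X hX EA mEA (t+tau) n B) mulr_suml.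
have sumPi : forall B : {set {ffun 'I_n -> T}}, \sum_(x in B) Pi x = Pr P (block_event X 0 n B).
  move=> B; have := @Pr_sum_block _ _ _ P _ X hX setT measurableT 0 n B.
  rewrite setTI => ->; apply: eq_bigr => x _; by rewrite setTI.
have sump : forall B : {set {ffun 'I_n -> T}}, \sum_(x in B) (Q x - (1 - lam tau) * Pi x) / lam tau =
    (\sum_(x in B) Q x - (1 - lam tau) * \sum_(x in B) Pi x) / lam tau.
  by move=> B; rewrite -mulr_suml sumrB -mulr_sumr.
have ET : forall s, block_event X s n [set: {ffun 'I_n -> T}] = setT.
  move=> s; apply/seteqP; split => w // _.
  by rewrite /block_event /= inE.
split.
- by move=> x; rewrite divr_ge0 ?subr_ge0 ?key // ltW.
- transitivity (\sum_(x in [set: {ffun 'I_n -> T}]%SET) (Q x - (1 - lam tau) * Pi x) / lam tau).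
    by apply: eq_bigl => x; rewrite inE.
  rewrite (sump [set: {ffun 'I_n -> T}]%SET) sumQ sumPi !ET setIT /Pr probability_setT /= -/(Pr P EA) -/pa.
  field; rewrite ?gt_eqF //.
- move=> B; rewrite sump sumQ sumPi.
  field; rewrite ?gt_eqF //.
Qed.
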